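(* Let $(\mathfrak g,B,S,E)$ be a quadratic ENL-RB algebra of weight $\lambda\neq0$. Then $(\mathfrak g,\mathfrak g^*_{r^{B,S}},E)$ is an ENL bialgebra; that is, $(\mathfrak g,\mathfrak g^*_{r^{B,S}})$ is a Lie bialgebra, $E$ is an equivariant Nijenhuis operator on $\mathfrak g$ and $E^*$ is an equivariant Nijenhuis operator on the Lie algebra $\mathfrak g^*_{r^{B,S}}$, i.e. $E^*[\xi,\eta]_{r^{B,S}}=[E^*\xi,\eta]_{r^{B,S}}$ for all $\xi,\eta\in\mathfrak g^*$.
   Context: All vector spaces are finite-dimensional over an algebraically closed field of characteristic zero. A Rota–Baxter operator of weight $\lambda$ on a Lie algebra $\mathfrak g$ is linear $B$ with $[Bx,By]=B([Bx,y]+[x,By]+\lambda[x,y])$. A quadratic Rota–Baxter Lie algebra $(\mathfrak g,B,S)$ of weight $\lambda$ is such a $B$ together with a nondegenerate symmetric invariant ($S([x,y],z)+S(y,[x,z])=0$) bilinear form $S$ with $S(x,By)+S(Bx,y)+\lambda S(x,y)=0$. A quadratic ENL-RB algebra $(\mathfrak g,B,S,E)$ is a quadratic Rota–Baxter Lie algebra $(\mathfrak g,B,S)$ of weight $\lambda\neq0$ with a linear $E:\mathfrak g\to\mathfrak g$ such that $E[x,y]=[x,Ey]$ for all $x,y$, $S(Ex,y)=S(x,Ey)$, and $E\circ B=B\circ E$. Let $\mathcal I_S:\mathfrak g^*\to\mathfrak g$ be defined by $\langle\mathcal I_S^{-1}x,y\rangle=S(x,y)$, and let $r^{B,S}\in\mathfrak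 g\otimes\mathfrak g$ be the tensor with $r_+:=r^{B,S}(\xi,\cdot)=\frac1\lambda(B+\lambda\mathrm{Id})\circ\mathcal I_S(\xi)$; set $r_-:=-r_+^*$. The Lie algebra $\mathfrak g^*_{r^{B,S}}$ is $\mathfrak g^*$ with bracket $[\xi,\eta]_{r^{B,S}}=\mathrm{ad}^*_{r_+\xi}\eta-\mathrm{ad}^*_{r_-\eta}\xi$, where $\langle\mathrm{ad}^*_x\xi,y\rangle=-\langle\xi,[x,y]\rangle$. A Lie bialgebra $(\mathfrak g,\mathfrak g^* )$ means Lie brackets on $\mathfrak g$ and $\mathfrak g^*$ such that the map $\Delta:\mathfrak g\to\mathfrak g\otimes\mathfrak g$ dual to the bracket on $\mathfrak g^*$ is a 1-cocycle: $\Delta([x,y])=(\mathrm{ad}_x\otimes\mathrm{Id}+\mathrm{Id}\otimes\mathrm{ad}_x)\Delta(y)-(\mathrm{ad}_y\otimes\mathrm{Id}+\mathrm{Id}\otimes\mathrm{ad}_y)\Delta(x)$. An ENL bialgebra $(\mathfrak g,\mathfrak g^*,E)$ is a Lie bialgebra such that $E[x,y]=[x,Ey]$ on $\mathfrak g$ and $E^*[\xi,\eta]=[\xi,E^*\eta]$ on $\mathfrak g^*$. *)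

(* Defs.v *)
(* A finite-dimensional vector space g over K is modelled in
   coordinates as row vectors 'rV[K]_n; its dual g^* is also 'rV[K]_n with the
   canonical pairing <xi, x> = \sum_i xi_i x_i (delta_mx 0 i is the basis and
   dual basis).  Linear maps g -> g are matrices acting on the right
   (x |-> x *m M); g (x) g is 'M[K]_n (coefficients on e_i (x) e_j). *)
From HB Require Import structures.
From mathcomp Require Import all_boot all_order all_algebra.
Set Implicit Arguments. Unset Strict Implicit. Unset Printing Implicit Defensive.
Import Order.TTheory GRing.Theory Num.Theory.
Local Open Scope ring_scope.

Section Defs.
Variables (K : fieldType) (n : nat).

Definition vec := 'rV[K]_n.
Definition bracket := vec -> vec -> vec.

Definition ev (i : 'I_n) : vec := delta_mx 0 i.

Definition pair (xi x : vec) : K := \sum_i xi 0 i * x 0 i.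

Definition is_lie (br : bracket) : Prop :=
  [/\ (forall (a : K) x y z, br (a *: x + y) z = a *: br x z + br y z),
      (forall (a : K) x y z, br x (a *: y + z) = a *: br x y + br x z),
      (forall x, br x x = 0) &
      (forall x y z, br x (br y z) + br y (br z x) + br z (br x y) = 0)].

Definition dual_map (f : vec -> vec) (xi : vec) : vec :=
  \row_j pair xi (f (ev j)).

Definition coad (br : bracket) (x xi : vec) : vec :=
  \row_j - pair xi (br x (ev j)).

Definition Sform (S : 'M[K]_n) (x y : vec) : K := (x *m S *m y^T) 0 0.

(* I_S : g^* -> g, characterised by <I_S^{-1} x, y> = S(x,y), i.e.
   I_S^{-1} x = x *m S  (S symmetric nondegenerate) *)
Definition IS (S : 'M[K]_n) (xi : vec) : vec := xi *m invmx S.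

Definition rplus (lam : K) (B S : 'M[K]_n) (xi : vec) : vec :=
  lam^-1 *: (IS S xi *m (B + lam%:M)).

Definition rminus (lam : K) (B S : 'M[K]_n) (xi : vec) : vec :=
  - dual_map (rplus lam B S) xi.

Definition rbracket (br : bracket) (lam : K) (B S : 'M[K]_n) : bracket :=
  fun xi eta => coad br (rplus lam B S xi) eta - coad br (rminus lam B S eta) xi.

Definition tens (u v : vec) : 'M[K]_n := u^T *m v.

Definition ad_tens (br : bracket) (x : vec) (T : 'M[K]_n) : 'M[K]_n :=
  \sum_i \sum_j T i j *: (tens (br x (ev i)) (ev j) + tens (ev i) (br x (ev j))).

Definition cobracket (brd : bracket) (x : vec) : 'M[K]_n :=
  \matrix_(i, j) pair (brd (ev i) (ev j)) x.

Definition is_cocycle (br brd : bracket) : Prop :=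
  forall x y, cobracket brd (br x y) =
    ad_tens br x (cobracket brd y) - ad_tens br y (cobracket brd x).

Definition lie_bialgebra (br brd : bracket) : Prop :=
  [/\ is_lie br, is_lie brd & is_cocycle br brd].

Definition ENL_bialgebra (br brd : bracket) (E : 'M[K]_n) : Prop :=
  [/\ lie_bialgebra br brd,
      (forall x y, br x y *m E = br x (y *m E)) &
      (forall xi eta, dual_map (fun x => x *m E) (brd xi eta)
                      = brd xi (dual_map (fun x => x *m E) eta))].

Definition rota_baxter (br : bracket) (lam : K) (B : 'M[K]_n) : Prop :=
  forall x y, br (x *m B) (y *m B)
              = (br (x *m B) y + br x (y *m B) + lam *: br x y) *m B.

Definition quadratic_RB (br : bracket) (lam : K) (B S : 'M[K]_n) : Prop :=
  [/\ is_lie br, rota_baxter br lam B,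
      S \in unitmx /\ S^T = S,
      (forall x y z, Sform S (br x y) z + Sform S y (br x z) = 0) &
      (forall x y, Sform S x (y *m B) + Sform S (x *m B) y + lam * Sform S x y = 0)].

Definition quadratic_ENL_RB (br : bracket) (lam : K) (B S E : 'M[K]_n) : Prop :=
  [/\ quadratic_RB br lam B S, lam != 0,
      (forall x y, br x y *m E = br x (y *m E)),
      (forall x y, Sform S (x *m E) y = Sform S x (y *m E)) &
      B *m E = E *m B].

End Defs.

(* Main.v *)
Require Import Defs.
From HB Require Import structures.
From mathcomp Require Import all_boot all_order all_algebra ring.
Import GRing.Theory.
Local Open Scope ring_scope.
Set Implicit Arguments. Unset Strict Implicit.

Section Basics.
Variables (K : fieldType) (n : nat).
Implicit Types (x y z u v xi eta : 'rV[K]_n) (M : 'M[K]_n).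

Lemma entry0 (M : 'M[K]_n) i j : ((ev K i) *m M *m (ev K j)^T) 0 0 = M i j.
Proof. by rewrite /ev -rowE trmx_delta -colE !mxE. Qed.

Lemma entry1 u j : (u *m (ev K j)^T) 0 0 = u 0 j.
Proof. by rewrite /ev trmx_delta -colE !mxE. Qed.

Lemma pairE xi x : pair xi x = (xi *m x^T) 0 0.
Proof. rewrite /pair !mxE; apply: eq_bigr => i _; by rewrite !mxE. Qed.

Lemma mx_form0 M : (forall u v, (u *m M *m v^T) 0 0 = 0) -> M = 0.
Proof. move=> h; apply/matrixP => i j; rewrite -entry0 h mxE //. Qed.

Lemma dual_mapM M xi : dual_map (fun x => x *m M) xi = xi *m M^T.
Proof.
apply/rowP => j; rewrite /dual_map mxE pairE /ev -rowE.
rewrite -[RHS]entry1 /ev; congr (_ _ 0 0).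
by rewrite tr_row colE mulmxA trmx_delta.
Qed.

Lemma dual_map_ext (f g : 'rV[K]_n -> 'rV[K]_n) xi :
  (forall x, f x = g x) -> dual_map f xi = dual_map g xi.
Proof. by move=> h; apply/rowP => j; rewrite !mxE h. Qed.

End Basics.
Section Bracket.
Variables (K : fieldType) (n : nat) (br : bracket K n).
Hypothesis L : is_lie br.
Implicit Types (x y z u v : 'rV[K]_n).

Lemma br0l z : br 0 z = 0.
Proof. case: L => Hl _ _ _; have := Hl 1 0 0 z; rewrite !scale1r addr0 => h.
by apply: (addrI (br 0 z)); rewrite addr0 -h. Qed.
Lemma br0r z : br z 0 = 0.
Proof. case: L => _ Hr _ _; have := Hr 1 z 0 0; rewrite !scale1r addr0 => h.
by apply: (addrI (br z 0)); rewrite addr0 -h. Qed.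
Lemma brZl a x z : br (a *: x) z = a *: br x z.
Proof. case: L => Hl _ _ _; by have := Hl a x 0 z; rewrite !addr0 br0l addr0. Qed.
Lemma brZr a x z : br z (a *: x) = a *: br z x.
Proof. case: L => _ Hr _ _; by have := Hr a z x 0; rewrite !addr0 br0r addr0. Qed.
Lemma brDl x y z : br (x + y) z = br x z + br y z.
Proof. case: L => Hl _ _ _; by have := Hl 1 x y z; rewrite !scale1r. Qed.
Lemma brDr x y z : br z (x + y) = br z x + br z y.
Proof. case: L => _ Hr _ _; by have := Hr 1 z x y; rewrite !scale1r. Qed.
Lemma brNl x z : br (- x) z = - br x z.
Proof. by rewrite -scaleN1r brZl scaleN1r. Qed.
Lemma brNr x z : br z (- x) = - br z x.
Proof. by rewrite -scaleN1r brZr scaleN1r. Qed.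
Lemma brA x y : br y x = - br x y.
Proof. case: L => _ _ Ha _; have := Ha (x + y); rewrite brDl !brDr !Ha add0r addr0.
by move/eqP; rewrite addrC addr_eq0 => /eqP. Qed.
Lemma brJ x y z : br x (br y z) + br y (br z x) + br z (br x y) = 0.
Proof. by case: L. Qed.

Lemma br_sum (I : Type) (r : seq I) (P : pred I) (F : I -> 'rV[K]_n) x :
  br x (\sum_(i <- r | P i) F i) = \sum_(i <- r | P i) br x (F i).
Proof.
apply: (big_rec2 (fun a b => br x a = b)); first exact: br0r.
by move=> i a b _ <-; rewrite brDr.
Qed.

Definition adm x : 'M[K]_n := \matrix_(i, j) (br x (ev K i)) 0 j.

Lemma br_adm x u : br x u = u *m adm x.
Proof.
rewrite {1}(row_sum_delta u) br_sum; apply/rowP => j.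
rewrite !mxE summxE; apply: eq_bigr => i _; rewrite brZr !mxE; congr (_ * _).
Qed.

End Bracket.
Lemma entry2 (K : fieldType) n (w : 'rV[K]_n) j : (w *m (delta_mx j 0 : 'M[K]_(n,1))) 0 0 = w 0 j.
Proof. by rewrite -colE mxE. Qed.

Lemma coad_adm (K : fieldType) n (br : bracket K n) (L : is_lie br) a xi :
  coad br a xi = - (xi *m (adm br a)^T).
Proof.
apply/rowP => j; rewrite /coad mxE [RHS]mxE pairE (br_adm L) /ev -rowE tr_row colE mulmxA.
by rewrite entry2.
Qed.

Section Quad.
Variables (K : fieldType) (n : nat) (br : bracket K n) (lam : K) (B S E : 'M[K]_n).
Hypothesis L : is_lie br.
Hypothesis RB : rota_baxter br lam B.
Hypothesis Su : S \in unitmx.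
Hypothesis St : S^T = S.
Hypothesis Sinv : forall x y z, Sform S (br x y) z + Sform S y (br x z) = 0.
Hypothesis SB : forall x y, Sform S x (y *m B) + Sform S (x *m B) y + lam * Sform S x y = 0.
Hypothesis lam0 : lam != 0.
Hypothesis EN : forall x y, br x y *m E = br x (y *m E).
Hypothesis ES : forall x y, Sform S (x *m E) y = Sform S x (y *m E).
Hypothesis BE : B *m E = E *m B.
Implicit Types (x y z u v xi eta : 'rV[K]_n).

Lemma hB : S *m B^T + B *m S + lam *: S = 0.
Proof.
apply: mx_form0 => u v.
have e : u *m (S *m B^T + B *m S + lam *: S) *m v^T =
  u *m S *m (v *m B)^T + u *m B *m S *m v^T + lam *: (u *m S *m v^T).
  by rewrite trmx_mul !mulmxDr !mulmxDl -!scalemxAr -!scalemxAl !mulmxA.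
by rewrite e -(SB u v) /Sform !mxE.
Qed.

Lemma hE : E *m S = S *m E^T.
Proof.
apply/eqP; rewrite -subr_eq0; apply/eqP; apply: mx_form0 => u v.
have e : u *m (E *m S - S *m E^T) *m v^T =
  u *m E *m S *m v^T - u *m S *m (v *m E)^T.
  by rewrite trmx_mul !mulmxBr !mulmxBl !mulmxA.
rewrite e; have := ES u v; rewrite /Sform => h; by rewrite mxE h [X in _ + X]mxE subrr.
Qed.

Lemma hA a : adm br a *m S + S *m (adm br a)^T = 0.
Proof.
apply: mx_form0 => u v.
have e : u *m (adm br a *m S + S *m (adm br a)^T) *m v^T =
  u *m adm br a *m S *m v^T + u *m S *m (v *m adm br a)^T.
  by rewrite trmx_mul !mulmxDr !mulmxDl !mulmxA.
by rewrite e -(Sinv a u v) /Sform -!(br_adm L) mxE.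
Qed.

Lemma coadE a xi : coad br a xi = br a (IS S xi) *m S.
Proof.
rewrite (coad_adm L) (br_adm L) /IS.
have h : (adm br a)^T = - (invmx S *m adm br a *m S).
  apply: (can_inj (mulKmx Su)).
  rewrite mulmxN !mulmxA (mulmxV Su) mul1mx.
  by apply/eqP; rewrite -addr_eq0 addrC hA.
by rewrite h mulmxN opprK !mulmxA.
Qed.

Lemma rplusE xi : rplus lam B S xi = IS S xi + lam^-1 *: (IS S xi *m B).
Proof.
rewrite /rplus mulmxDr mul_mx_scalar scalerDr scalerA mulVf // scale1r addrC //.
Qed.

Lemma BtSi : (B^T + lam%:M) *m invmx S = - (invmx S *m B).
Proof.
have hB' : S *m B^T + lam *: S = - (B *m S).
  by apply/eqP; rewrite -addr_eq0 addrAC hB.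
apply: (can_inj (mulKmx Su)).
by rewrite mulmxA mulmxDr mul_mx_scalar hB' mulNmx (mulmxK Su) mulmxN (mulKVmx Su).
Qed.

Lemma rminusE eta : rminus lam B S eta = lam^-1 *: (IS S eta *m B).
Proof.
rewrite /rminus (@dual_map_ext _ _ _ (fun x => x *m (lam^-1 *: (invmx S *m (B + lam%:M))))).
  rewrite dual_mapM linearZ /= trmx_mul trmx_inv St linearD /= tr_scalar_mx BtSi.
  by rewrite -scalemxAr mulmxN scalerN opprK /IS mulmxA.
by move=> x; rewrite /rplus /IS -scalemxAr mulmxA.
Qed.

Definition brB x y := br x y + lam^-1 *: (br (x *m B) y + br x (y *m B)).

Lemma rbrE xi eta : rbracket br lam B S xi eta = brB (IS S xi) (IS S eta) *m S.
Proof.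
rewrite /rbracket rplusE rminusE !coadE -mulmxBl; congr (_ *m S).
rewrite /brB (brDl L) !(brZl L) (brA L (_ *m B)).
by apply/rowP => j; rewrite !mxE; ring.
Qed.

Lemma brB_B y z : brB y z *m B = lam^-1 *: br (y *m B) (z *m B).
Proof.
rewrite RB /brB !mulmxDl -?scalemxAl ?mulmxDl -?scalemxAl.
apply/rowP => j; rewrite !mxE.
by field.
Qed.

Lemma brBDl a x x' y : brB (a *: x + x') y = a *: brB x y + brB x' y.
Proof.
rewrite /brB mulmxDl -scalemxAl ?(brDl L) ?(brZl L) ?(brDr L) ?(brZr L).
by apply/rowP => j; rewrite !mxE; ring.
Qed.

Lemma brBDr a x x' y : brB y (a *: x + x') = a *: brB y x + brB y x'.
Proof.
rewrite /brB mulmxDl -scalemxAl ?(brDr L) ?(brZr L).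
by apply/rowP => j; rewrite !mxE; ring.
Qed.

Lemma brBxx x : brB x x = 0.
Proof.
case: L => _ _ Ha _.
by rewrite /brB Ha (brA L (x *m B)) addNr scaler0 addr0 || by rewrite /brB Ha (brA L (x *m B)) subrr scaler0 addr0.
Qed.

Lemma brBE1 x y : brB x y *m E = brB x (y *m E).
Proof.
rewrite /brB mulmxDl -scalemxAl mulmxDl !EN -mulmxA BE mulmxA //.
Qed.

Lemma brE_l x y : br (x *m E) y = br x y *m E.
Proof. by rewrite (brA L y (x *m E)) -EN (brA L x y) mulNmx opprK. Qed.

Lemma brBE2 x y : brB (x *m E) y = brB x y *m E.
Proof.
by rewrite /brB mulmxDl -scalemxAl mulmxDl -!brE_l -(mulmxA x E B) -BE mulmxA.
Qed.

Lemma brBJ x y z : brB x (brB y z) + brB y (brB z x) + brB z (brB x y) = 0.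
Proof.
have e : forall a b c, brB a (brB b c) = br a (brB b c) +
   lam^-1 *: (br (a *m B) (brB b c) + lam^-1 *: br a (br (b *m B) (c *m B))).
  by move=> a b c; rewrite {1}/brB brB_B (brZr L).
rewrite !e /brB; do 3 rewrite ?(brDr L) ?(brZr L).
apply/rowP => j; rewrite !mxE.
pose J a b c := congr1 (fun v : 'rV[K]_n => v 0 j) (brJ L a b c).
have h1 := J x y z; have h2 := J (x *m B) y z; have h3 := J x (y *m B) z;
have h4 := J x y (z *m B); have h5 := J (x *m B) (y *m B) z;
have h6 := J x (y *m B) (z *m B); have h7 := J (x *m B) y (z *m B).
rewrite /= !mxE in h1 h2 h3 h4 h5 h6 h7.
move/eqP: h1; rewrite -!addrA addr_eq0 => /eqP ->.
move/eqP: h2; rewrite -!addrA addr_eq0 => /eqP ->.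
move/eqP: h3; rewrite -!addrA addr_eq0 => /eqP ->.
move/eqP: h4; rewrite -!addrA addr_eq0 => /eqP ->.
move/eqP: h5; rewrite -!addrA addr_eq0 => /eqP ->.
move/eqP: h6; rewrite -!addrA addr_eq0 => /eqP ->.
move/eqP: h7; rewrite -!addrA addr_eq0 => /eqP ->.
ring.
Qed.

Lemma ISK v : IS S (v *m S) = v.
Proof. by rewrite /IS (mulmxK Su). Qed.
Lemma IS_lin a u v : IS S (a *: u + v) = a *: IS S u + IS S v.
Proof. by rewrite /IS mulmxDl scalemxAl. Qed.

Lemma rbr_lie : is_lie (rbracket br lam B S).
Proof.
split.
- by move=> a x y z; rewrite !rbrE IS_lin brBDl mulmxDl -scalemxAl.
- by move=> a x y z; rewrite !rbrE IS_lin brBDr mulmxDl -scalemxAl.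
- by move=> x; rewrite rbrE brBxx mul0mx.
- by move=> x y z; rewrite !rbrE !ISK -!mulmxDl brBJ mul0mx.
Qed.

Lemma EtSi : E^T *m invmx S = invmx S *m E.
Proof.
apply: (can_inj (mulKmx Su)).
by rewrite mulmxA -hE (mulmxK Su) (mulKVmx Su).
Qed.

Lemma IS_E xi : IS S (xi *m E^T) = IS S xi *m E.
Proof. by rewrite /IS -mulmxA EtSi mulmxA. Qed.

Lemma dual1 xi eta : dual_map (fun x => x *m E) (rbracket br lam B S xi eta)
  = rbracket br lam B S xi (dual_map (fun x => x *m E) eta).
Proof. by rewrite !dual_mapM !rbrE IS_E -brBE1 -mulmxA -hE mulmxA. Qed.

Lemma dual2 xi eta : dual_map (fun x => x *m E) (rbracket br lam B S xi eta)
  = rbracket br lam B S (dual_map (fun x => x *m E) xi) eta.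
Proof. by rewrite !dual_mapM !rbrE IS_E brBE2 -mulmxA -hE mulmxA. Qed.

End Quad.

Section Cocycle.
Variables (K : fieldType) (n : nat) (br : bracket K n) (lam : K) (B S : 'M[K]_n).
Hypothesis L : is_lie br.
Implicit Types (x y z u v xi eta : 'rV[K]_n).

Definition Rm := lam^-1 *: (invmx S *m (B + lam%:M)).

Lemma rplusM xi : rplus lam B S xi = xi *m Rm.
Proof. by rewrite /rplus /IS /Rm -scalemxAr mulmxA. Qed.

Lemma rminusM eta : rminus lam B S eta = - (eta *m Rm^T).
Proof. by rewrite /rminus (dual_map_ext _ rplusM) dual_mapM. Qed.

Lemma evE (M : 'M[K]_n) i j : (ev K i *m M) 0 j = M i j.
Proof. by rewrite /ev -rowE mxE. Qed.

Lemma pairB u v x : pair (u - v) x = pair u x - pair v x.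
Proof. by rewrite /pair -sumrB; apply: eq_bigr => i _; rewrite !mxE mulrBl. Qed.

Lemma pair_coad_ev a j x : pair (coad br a (ev K j)) x = - (br a x) 0 j.
Proof.
rewrite pairE (coad_adm L) mulNmx -mulmxA -trmx_mul -(br_adm L) [LHS]mxE.
by rewrite /ev -rowE !mxE.
Qed.

Lemma ad_tensE T x : ad_tens br x T = (adm br x)^T *m T + T *m adm br x.
Proof.
have t1 i j : tens (br x (ev K i)) (ev K j) = (adm br x)^T *m (delta_mx i j : 'M[K]_n).
  by rewrite /tens (br_adm L) /ev -rowE tr_row colE -mulmxA mul_delta_mx.
have t2 i j : tens (ev K i) (br x (ev K j)) = (delta_mx i j : 'M[K]_n) *m adm br x.
  by rewrite /tens (br_adm L) /ev trmx_delta mulmxA mul_delta_mx.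
rewrite /ad_tens.
under eq_bigr => i _ do under eq_bigr => j _ do rewrite t1 t2 scalerDr scalemxAr scalemxAl.
under eq_bigr => i _ do rewrite big_split /= -mulmx_sumr -mulmx_suml.
by rewrite big_split /= -mulmx_sumr -mulmx_suml -matrix_sum_delta.
Qed.

Lemma adm_br x y : adm br (br x y) = adm br y *m adm br x - adm br x *m adm br y.
Proof.
suff h : forall u, br (br x y) u = u *m (adm br y *m adm br x - adm br x *m adm br y).
  by apply/matrixP => i j; rewrite mxE h evE.
move=> u; rewrite mulmxBr !mulmxA -!(br_adm L).
have J := brJ L x y u.
rewrite (brA L x u) (brNr L) (brA L (br x y) u) in J.
apply/rowP => j; move/rowP/(_ j): J; rewrite !mxE => J.
by apply/eqP; rewrite eq_sym -subr_eq0 -J; apply/eqP; ring.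
Qed.

Lemma cobrE x : cobracket (rbracket br lam B S) x = (adm br x)^T *m Rm + Rm *m adm br x.
Proof.
apply/matrixP => i j; rewrite mxE /rbracket pairB !pair_coad_ev rminusM rplusM.
rewrite (brNl L) (brA L x) (brA L x) !(br_adm L).
have mxN (M : 'M[K]_(1, n)) a b : (- M) a b = - M a b by rewrite mxE.
rewrite !mxN !opprK -!mulmxA !evE [LHS]addrC.
rewrite -[(adm br x)^T *m Rm]trmxK trmx_mul trmxK [in RHS]mxE.
by congr (_ + _); rewrite [RHS]mxE.
Qed.

Lemma cocycle : is_cocycle br (rbracket br lam B S).
Proof.
move=> x y; rewrite !cobrE adm_br !ad_tensE.
rewrite linearB /= !trmx_mul.
apply/matrixP => i j.
rewrite !(mulmxDr, mulmxDl, mulmxBr, mulmxBl, mulNmx, mulmxN, mulmxA).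
rewrite !mxE. ring.
Qed.

End Cocycle.

Theorem theorem4p3 (K : closedFieldType) (n : nat)
  (br : bracket K n) (lam : K) (B S E : 'M[K]_n) :
  [pchar K] =i pred0 ->
  quadratic_ENL_RB br lam B S E ->
  ENL_bialgebra br (rbracket br lam B S) E /\
  (forall xi eta,
     dual_map (fun x => x *m E) (rbracket br lam B S xi eta)
     = rbracket br lam B S (dual_map (fun x => x *m E) xi) eta).
Proof.
move=> _ [[L RB [Su St] Sinv SB] lam0 EN ES BE].
split; [split; [split|..]|].
- exact: L.
- by eapply rbr_lie; eauto.
- exact: cocycle L.
- exact: EN.
- by move=> xi eta; eapply dual1; eauto.
- by move=> xi eta; eapply dual2; eauto.
Qed.
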